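(* Let $\mathcal X$ be a finite set, $\mathcal H$ a $d$-dimensional Hilbert space, and $\{x\mapsto\rho^B_x(\theta)\}_{\theta\in\Theta}$ a compound cq-channel with $\rho^B_x(\theta)\in\mathcal D(\mathcal H)$ and $\Theta$ an arbitrary index set. There is a constant $K>0$ depending only on $d$ such that for every $T\in\mathbb N$ there exists a compound cq-channel $\{x\mapsto\rho^B_x(\widetilde\theta)\}_{\widetilde\theta\in\widetilde\Theta}$ with $\rho^B_x(\widetilde\theta)\in\mathcal D(\mathcal H)$ such that: (1) $|\widetilde\Theta|\le K^{|\mathcal X|}T^{6|\mathcal X|d^2}$; (2) for every $\theta\in\Theta$ there is $\widetilde\theta\in\widetilde\Theta$ such that for all $\mathbf x\in\mathcal X^T$, $\|\rho^{\mathbf B}_{\mathbf x}(\theta)-\rho^{\mathbf B}_{\mathbf x}(\widetilde\theta)\|_1\le T^{-5}$; (3) for every PMF $P_X$ on $\mathcal X$, $\min_{\widetilde\theta\in\widetilde\Theta}I(P_X,\rho^B_x(\widetilde\theta))\ge\inf_{\theta\in\Theta}I(P_X,\rho^B_x(\theta))-2T^{-6}\log(T^6d)$.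
   Context: For $\mathbf x=(x_1,\dots,x_T)$, $\rho^{\mathbf B}_{\mathbf x}(\theta)=\rho^B_{x_1}(\theta)\otimes\cdots\otimes\rho^B_{x_T}(\theta)$. $\|X\|_1=\operatorname{tr}\sqrt{X^\dagger X}$. $I(P_X,\rho_x)=H(\sum_xP_X(x)\rho_x)-\sum_xP_X(x)H(\rho_x)$ is the Holevo information, $H$ the von Neumann entropy. *)

(* Defs.v *)
From HB Require Import structures.
From mathcomp Require Import all_boot all_order all_algebra.
From mathcomp Require Import complex.
From mathcomp Require Import classical_sets boolp reals exp.
Set Implicit Arguments. Unset Strict Implicit. Unset Printing Implicit Defensive.
Import Order.TTheory GRing.Theory Num.Theory.
Local Open Scope ring_scope.

Section QuantumDefs.
Variable R : realType.
Local Notation C := (R[i]).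

Definition adjmx {m n : nat} (A : 'M[C]_(m, n)) : 'M[C]_(n, m) :=
  (map_mx Num.conj A)^T.

Definition unitarymx {n : nat} (U : 'M[C]_n) : Prop :=
  U *m adjmx U = 1%:M.

Definition spectrum_of {n : nat} (A : 'M[C]_n) (lam : 'rV[R]_n) : Prop :=
  exists U : 'M[C]_n, unitarymx U /\
    A = U *m diag_mx (map_mx (fun r : R => (r%:C)%C) lam) *m adjmx U.

(* a chosen eigenvalue vector (meaningful for Hermitian A, where it exists) *)
Definition eigvals {n : nat} (A : 'M[C]_n) : 'rV[R]_n :=
  xget 0 (spectrum_of A).

(* positive semidefinite (over C this entails Hermitian) *)
Definition psdmx {n : nat} (A : 'M[C]_n) : Prop :=
  forall v : 'cV[C]_n, 0 <= (adjmx v *m A *m v) 0 0.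

Definition density {n : nat} (A : 'M[C]_n) : Prop :=
  psdmx A /\ \tr A = 1.

(* von Neumann entropy H(A) = - tr (A log A) = - sum_i l_i ln l_i  (ln 0 = 0) *)
Definition vN_entropy {n : nat} (A : 'M[C]_n) : R :=
  - \sum_(i < n) eigvals A 0 i * ln (eigvals A 0 i).

Definition trnorm {n : nat} (X : 'M[C]_n) : R :=
  \sum_(i < n) Num.sqrt (eigvals (adjmx X *m X) 0 i).

Definition holevo {X : finType} {d : nat} (P : X -> R) (rho : X -> 'M[C]_d) : R :=
  vN_entropy (\sum_(x : X) (P x)%:C *: rho x)%C
  - \sum_(x : X) P x * vN_entropy (rho x).

Definition pmf {X : finType} (P : X -> R) : Prop :=
  (forall x, 0 <= P x) /\ \sum_(x : X) P x = 1.

(* T-fold tensor product rho_{x_1} (x) ... (x) rho_{x_T}, as a matrix indexed by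
   the basis {ffun 'I_T -> 'I_d} of (C^d)^{(x) T} (of cardinality d^T) *)
Definition tensor_state {X : finType} {d T : nat} (rho : X -> 'M[C]_d)
  (x : 'I_T -> X) : 'M[C]_(#|{ffun 'I_T -> 'I_d}|) :=
  \matrix_(i, j)
    let a : {ffun 'I_T -> 'I_d} := enum_val i in
    let b : {ffun 'I_T -> 'I_d} := enum_val j in
    \prod_(t < T) rho (x t) (a t) (b t).

End QuantumDefs.

(* Main.v *)
Require Import Defs.
From HB Require Import structures.
From mathcomp Require Import all_boot all_order all_algebra.
From mathcomp Require Import complex.
From mathcomp Require Import classical_sets boolp reals exp.
From mathcomp Require Import ring lra zify.
Set Implicit Arguments. Unset Strict Implicit. Unset Printing Implicit Defensive.
Import Order.TTheory GRing.Theory Num.Theory.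
Local Open Scope ring_scope.
Section Main. Variable R : realType.
Local Notation C := (R[i]).
Local Notation RC := (fun r : R => (r%:C)%C).
Lemma conjE (x : C) : x^* = conjc x. Proof. by []. Qed.
Lemma conj_real (r : R) : ((r%:C)%C)^* = (r%:C)%C :> C. Proof. exact: conjc_real. Qed.

Lemma adjmxE m n (A : 'M[C]_(m, n)) i j : adjmx A i j = (A j i)^*.
Proof. by rewrite !mxE. Qed.
Lemma adjmxK m n (A : 'M[C]_(m, n)) : adjmx (adjmx A) = A.
Proof. by apply/matrixP => i j; rewrite !adjmxE conjCK. Qed.
Lemma adjmx_mul m n p (A : 'M[C]_(m, n)) (B : 'M[C]_(n, p)) :
  adjmx (A *m B) = adjmx B *m adjmx A.
Proof. by rewrite /adjmx map_mxM trmx_mul. Qed.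
Lemma adjmxD m n (A B : 'M[C]_(m, n)) : adjmx (A + B) = adjmx A + adjmx B.
Proof. by apply/matrixP => i j; rewrite !mxE rmorphD. Qed.
Lemma adjmxN m n (A : 'M[C]_(m, n)) : adjmx (- A) = - adjmx A.
Proof. by apply/matrixP => i j; rewrite !mxE rmorphN. Qed.
Lemma adjmxB m n (A B : 'M[C]_(m, n)) : adjmx (A - B) = adjmx A - adjmx B.
Proof. by rewrite adjmxD adjmxN. Qed.
Lemma adjmx1 n : adjmx (1%:M : 'M[C]_n) = 1%:M.
Proof. by apply/matrixP => i j; rewrite !mxE eq_sym; case: eqP; rewrite ?rmorph1 ?rmorph0. Qed.
Lemma adjmx_diag n (lam : 'rV[R]_n) :
  adjmx (diag_mx (map_mx (fun r : R => (r%:C)%C) lam)) = diag_mx (map_mx (fun r : R => (r%:C)%C) lam).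
Proof.
apply/matrixP => i j; rewrite !mxE eq_sym; case: eqP => [->|_]; rewrite ?mulr1n ?mulr0n ?rmorph0 //.
exact: conj_real.
Qed.
Lemma unitary_adjK n (U : 'M[C]_n) : Defs.unitarymx U -> adjmx U *m U = 1%:M.
Proof. by move=> HU; apply: mulmx1C. Qed.

Lemma vnorm_ge0 n (v : 'cV[C]_n) : 0 <= (adjmx v *m v) 0 0.
Proof.
rewrite mxE; apply: sumr_ge0 => i _; rewrite adjmxE mulrC -normCK.
exact: exprn_ge0.
Qed.
Lemma vnormE n (v : 'cV[C]_n) : (adjmx v *m v) 0 0 = \sum_i `|v i 0| ^+ 2.
Proof. by rewrite mxE; apply: eq_bigr => i _; rewrite adjmxE mulrC -normCK. Qed.

Lemma entry_quad n (B : 'M[C]_n) (A : 'M[C]_n) (U : 'M[C]_n) i :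
  (adjmx U *m A *m U) i i = (adjmx (col i U) *m A *m col i U) 0 0.
Proof.
rewrite !mxE; apply: eq_bigr => k _; rewrite !mxE; congr (_ * _).
by apply: eq_bigr => l _; rewrite !mxE.
Qed.

Lemma spec_diag n (A : 'M[C]_n) lam U : Defs.unitarymx U ->
  A = U *m diag_mx (map_mx RC lam) *m adjmx U ->
  adjmx U *m A *m U = diag_mx (map_mx RC lam).
Proof.
move=> HU ->; have HU' := unitary_adjK HU.
by rewrite !mulmxA HU' mul1mx -mulmxA HU' mulmx1.
Qed.

Lemma spec_facts n (A : 'M[C]_n) lam : psdmx A -> spectrum_of A lam ->
  (forall i, 0 <= lam 0 i) /\ ((\sum_i lam 0 i)%:C)%C = \tr A.
Proof.
move=> HA [U [HU HAU]]; split.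
  move=> i; have := HA (col i U); rewrite -entry_quad //.
  rewrite (spec_diag HU HAU) !mxE eqxx mulr1n.
  by rewrite -[0]/((0%:C)%C) lecR.
have HU' := unitary_adjK HU.
rewrite HAU mxtrace_mulC mulmxA HU' mul1mx /mxtrace.
rewrite (@rmorph_sum _ _ (complex.real_complex R)).
by apply: eq_bigr => i _; rewrite !mxE eqxx mulr1n.
Qed.
Lemma RC_inj (x y : R) : (x%:C)%C = (y%:C)%C :> C -> x = y.
Proof. by move/(congr1 (@complex.Re R)). Qed.

Lemma xlnx_bounds (x : R) : 0 <= x <= 1 -> 0 <= - (x * ln x) <= 1.
Proof.
move=> /andP[x0 x1]; apply/andP; split.
  by rewrite oppr_ge0 mulr_ge0_le0 // ln_le0.
have [->|xn0] := eqVneq x 0; first by rewrite mul0r oppr0.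
have xp : 0 < x by rewrite lt_def xn0 x0.
have H : ln (1 + (x^-1 - 1)) <= x^-1 - 1.
  by apply: le_ln1Dx; rewrite ltrBrDl addrN invr_gt0.
rewrite addrC subrK lnV ?posrE // in H.
rewrite -mulrN (le_trans (ler_wpM2l x0 H)) // mulrBr mulfV ?mulr1 //.
by rewrite lerBlDr lerDl.
Qed.

Lemma entropy_bounds n (A : 'M[C]_n) : density A -> 0 <= vN_entropy A <= n%:R.
Proof.
move=> [Hpsd Htr]; rewrite /vN_entropy /eigvals.
case: (pselect (exists lam, spectrum_of A lam)) => [ex|nex]; last first.
  rewrite xgetPN; last by move=> lam H; apply: nex; exists lam.
  by rewrite big1 ?oppr0 ?lexx ?ler0n // => i _; rewrite mxE mul0r.
have Hs := xgetPex 0 ex; set lam := xget _ _ in Hs *.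
have [H0 Hsum] := spec_facts Hpsd Hs.
rewrite Htr in Hsum; have {}Hsum := RC_inj Hsum.
have H1 i : lam 0 i <= 1.
  rewrite -Hsum (bigD1 i) //= lerDl; apply: sumr_ge0 => j _; exact: H0.
rewrite -sumrN; have := @xlnx_bounds; move=> Hb.
apply/andP; split.
  by apply: sumr_ge0 => i _; have /andP[] := Hb _ ((introT andP (conj (H0 i) (H1 i)))).
rewrite -[n in n%:R]card_ord -sumr_const; apply: ler_sum => i _.
by have /andP[] := Hb _ ((introT andP (conj (H0 i) (H1 i)))).
Qed.
Lemma avg_density (X : finType) n (P : X -> R) (rho : X -> 'M[C]_n) :
  pmf P -> (forall x, density (rho x)) ->
  density (\sum_(x : X) ((P x)%:C)%C *: rho x).
Proof.
move=> [P0 P1] Hd; split.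
  move=> v; rewrite mulmx_sumr mulmx_suml summxE; apply: sumr_ge0 => x _.
  rewrite -scalemxAr -scalemxAl mxE; apply: mulr_ge0.
    by rewrite -[0]/((0%:C)%C) lecR.
  by case: (Hd x) => H _; apply: H.
rewrite raddf_sum /= -[1]/((1%:C)%C) -P1 (@rmorph_sum _ _ (complex.real_complex R)).
apply: eq_bigr => x _; rewrite mxtraceZ; case: (Hd x) => _ ->; by rewrite mulr1.
Qed.

Lemma holevo_lb (X : finType) n (P : X -> R) (rho : X -> 'M[C]_n) :
  pmf P -> (forall x, density (rho x)) -> - n%:R <= holevo P rho.
Proof.
move=> HP Hd; rewrite /holevo.
have /andP[H0 _] := entropy_bounds (avg_density HP Hd).
have H2 : \sum_x P x * vN_entropy (rho x) <= n%:R.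
  apply: (@le_trans _ _ (\sum_x P x * n%:R)).
    apply: ler_sum => x _; apply: ler_wpM2l; first by case: HP.
    by have /andP[] := entropy_bounds (Hd x).
  by rewrite -mulr_suml; case: HP => _ ->; rewrite mul1r.
by rewrite -sub0r lerB.
Qed.
Lemma sqrt_inv_mul (r : R) : (Num.sqrt r)^-1 * r = Num.sqrt r.
Proof.
have [r0|r0] := lerP r 0.
  have -> : Num.sqrt r = 0 by apply/eqP; rewrite sqrtr_eq0.
  by rewrite invr0 mul0r.
have s0 : Num.sqrt r != 0 by rewrite sqrtr_eq0 -ltNge.
by rewrite -{2}(sqr_sqrtr (ltW r0)) expr2 mulrA mulVf ?mul1r.
Qed.

Lemma sqrt_inv_idem (r : R) :
  (Num.sqrt r)^-1 * ((Num.sqrt r)^-1 * r * (Num.sqrt r)^-1) = (Num.sqrt r)^-1.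
Proof.
rewrite sqrt_inv_mul; have [->|s0] := eqVneq (Num.sqrt r) 0; first by rewrite invr0 mul0r.
by rewrite mulfV ?mulr1.
Qed.

Lemma mxEB m n (A B : 'M[C]_(m, n)) i j : (A - B) i j = A i j - B i j.
Proof. by rewrite !mxE. Qed.

Definition contraction n (W : 'M[C]_n) :=
  forall P : 'cV[C]_n, (adjmx (W *m P) *m (W *m P)) 0 0 <= (adjmx P *m P) 0 0.

Lemma diagRC_mul n (a b : 'rV[R]_n) :
  diag_mx (map_mx RC a) *m diag_mx (map_mx RC b) = diag_mx (map_mx RC (\row_i (a 0 i * b 0 i))).
Proof.
rewrite mulmx_diag; congr diag_mx; apply/rowP => i; rewrite !mxE.
by rewrite -rmorphM.
Qed.

Lemma trnorm_ge0 n (D : 'M[C]_n) : 0 <= trnorm D.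
Proof. by apply: sumr_ge0 => i _; apply: sqrtr_ge0. Qed.

Lemma trnorm_trace n (D : 'M[C]_n) :
  (exists lam, spectrum_of (adjmx D *m D) lam) ->
  exists W : 'M[C]_n, contraction W /\ ((trnorm D)%:C)%C = \tr (D *m W).
Proof.
move=> ex; have Hs := xgetPex 0 ex.
rewrite /trnorm /eigvals; set lam := xget _ _ in Hs *.
case: Hs => U [HU HDU].
have HU' := unitary_adjK HU.
have Hd := spec_diag HU HDU.
set ninv := \row_i (Num.sqrt (lam 0 i))^-1.
set Y := D *m U *m diag_mx (map_mx RC ninv).
exists (U *m adjmx Y).
have HYDU : adjmx Y *m D *m U = diag_mx (map_mx RC (\row_i Num.sqrt (lam 0 i))).
  rewrite /Y !adjmx_mul adjmx_diag -!mulmxA [adjmx D *m _]mulmxA.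
  rewrite [adjmx U *m _]mulmxA Hd diagRC_mul; congr diag_mx; congr map_mx.
  by apply/rowP => i; rewrite !mxE sqrt_inv_mul.
have HYY : adjmx Y *m Y = diag_mx (map_mx RC (\row_i ((Num.sqrt (lam 0 i))^-1 * lam 0 i * (Num.sqrt (lam 0 i))^-1))).
  rewrite {2}/Y !mulmxA HYDU diagRC_mul; congr diag_mx; congr map_mx.
  by apply/rowP => i; rewrite !mxE sqrt_inv_mul.
have HYg : Y *m (adjmx Y *m Y) = Y.
  rewrite HYY {1}/Y -mulmxA diagRC_mul /Y; congr (_ *m diag_mx (map_mx RC _)).
  by apply/rowP => i; rewrite !mxE sqrt_inv_idem.
set E := Y *m adjmx Y.
have EE : E *m E = E by rewrite /E mulmxA -[Y *m _ *m Y]mulmxA HYg.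
have EH : adjmx E = E by rewrite /E adjmx_mul adjmxK.
clearbody Y.
split.
  move=> P.
  have -> : adjmx (U *m adjmx Y *m P) *m (U *m adjmx Y *m P) = adjmx P *m E *m P.
    rewrite !adjmx_mul adjmxK !mulmxA -[adjmx P *m Y *m adjmx U *m U]mulmxA HU' mulmx1.
    by rewrite /E ?mulmxA.
  have := vnorm_ge0 ((1%:M - E) *m P).
  rewrite adjmx_mul adjmxB adjmx1 EH mulmxA -(mulmxA (adjmx P)) mulmxBl mul1mx.
  rewrite [E *m (_ - _)]mulmxBr mulmx1 EE subrr subr0 mulmxBr mulmx1 mulmxBl mxEB.
  by rewrite subr_ge0.
rewrite mulmxA mxtrace_mulC mulmxA HYDU /mxtrace (@rmorph_sum _ _ (complex.real_complex R)).
by apply: eq_bigr => i _; rewrite !mxE eqxx mulr1n.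
Qed.

Lemma ge0C (r : R) : (0 <= (r%:C)%C :> C) = (0 <= r).
Proof. exact: (lecR 0 r). Qed.

Lemma contraction0 n : contraction (0 : 'M[C]_n).
Proof. by move=> P; rewrite mul0mx mulmx0 mxE; exact: vnorm_ge0. Qed.

Lemma trnorm_le n (D : 'M[C]_n) (b : R) :
  (forall W, contraction W -> `|\tr (D *m W)| <= (b%:C)%C) -> trnorm D <= b.
Proof.
move=> H.
case: (pselect (exists lam, spectrum_of (adjmx D *m D) lam)) => [ex|nex].
  have [W [HW Htr]] := trnorm_trace ex.
  have := H W HW; rewrite -Htr ger0_norm ?lecR //.
  exact: trnorm_ge0.
have Hb : 0 <= b.
  by have := H 0 (@contraction0 n); rewrite mulmx0 mxtrace0 normr0 ge0C.
rewrite /trnorm /eigvals xgetPN; last by move=> lam Hl; apply: nex; exists lam.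
by rewrite big1 // => i _; rewrite mxE sqrtr0.
Qed.
Lemma amgm (x y : C) : `|x| * `|y| *+ 2 <= `|x| ^+ 2 + `|y| ^+ 2.
Proof.
have h : 0 <= `|(`|x| - `|y|)| ^+ 2 by apply: exprn_ge0.
rewrite real_normK ?realB ?normr_real // sqrrB in h.
by rewrite -subr_ge0 addrAC.
Qed.

Lemma sum_enum (T' : finType) (G : T' -> C) :
  \sum_(i < #|T'|) G (enum_val i) = \sum_f G f.
Proof. by rewrite [RHS](reindex (enum_val : 'I_#|T'| -> T')) //=; exact: onW_bij (enum_val_bij T'). Qed.

Lemma bilin_bound n (W : 'M[C]_n) (u v : 'I_n -> C) : contraction W ->
  \sum_a `|u a| ^+ 2 <= 1 -> \sum_b `|v b| ^+ 2 <= 1 ->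
  `|\sum_a \sum_b u a * (v b)^* * W b a| <= 1.
Proof.
move=> HW Hu Hv.
set Pc : 'cV[C]_n := \col_a u a.
set z := W *m Pc.
have -> : \sum_a \sum_b u a * (v b)^* * W b a = \sum_b (v b)^* * z b 0.
  rewrite exchange_big; apply: eq_bigr => b _; rewrite /z mxE mulr_sumr.
  by apply: eq_bigr => a _; rewrite !mxE; ring.
have Hz : \sum_b `|z b 0| ^+ 2 <= 1.
  rewrite -(vnormE z); apply: le_trans (HW Pc) _; rewrite vnormE.
  by under eq_bigr do rewrite mxE.
suff: `|\sum_b (v b)^* * z b 0| *+ 2 <= 1 *+ 2 by rewrite lerMn2r.
apply: (le_trans (y := \sum_b `|v b| * `|z b 0| *+ 2)).
  rewrite sumrMnl lerMn2r /=; apply: (le_trans (ler_norm_sum _ _ _)).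
  by apply: ler_sum => b _; rewrite normrM norm_conjC.
apply: (le_trans (ler_sum _ (fun b _ => amgm (v b) (z b 0)))).
by rewrite big_split /= mulr2n lerD.
Qed.
Definition tens T d (F : 'I_T -> 'M[C]_d) : 'M[C]_(#|{ffun 'I_T -> 'I_d}|) :=
  \matrix_(i, j) \prod_(t < T) F t ((enum_val i : {ffun 'I_T -> 'I_d}) t)
                                    ((enum_val j : {ffun 'I_T -> 'I_d}) t).

Lemma tensor_stateE (X : finType) d T (rho : X -> 'M[C]_d) (x : 'I_T -> X) :
  tensor_state rho x = tens (fun t => rho (x t)).
Proof. by []. Qed.

Section TensBound.
Variables (T d : nat) (F : 'I_T -> 'M[C]_d).
Variables (c : 'I_T -> ('I_d * 'I_d) -> C) (p q : 'I_T -> ('I_d * 'I_d) -> 'I_d -> C).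
Hypothesis HF : forall t i j, F t i j = \sum_k c t k * p t k i * (q t k j)^*.
Hypothesis Hp : forall t k, \sum_i `|p t k i| ^+ 2 <= 1.
Hypothesis Hq : forall t k, \sum_i `|q t k i| ^+ 2 <= 1.

Local Notation ev i := (enum_val i : {ffun 'I_T -> 'I_d}).

Lemma tens_expand a b : tens F a b =
  \sum_(kk : {ffun 'I_T -> ('I_d * 'I_d)}) (\prod_t c t (kk t)) *
     (\prod_t p t (kk t) (ev a t)) * (\prod_t q t (kk t) (ev b t))^*.
Proof.
rewrite mxE; under eq_bigr do rewrite HF.
rewrite bigA_distr_bigA; apply: eq_bigr => kk _.
by rewrite rmorph_prod -!big_split.
Qed.

Lemma vec_norm_le1 (pp : 'I_T -> ('I_d * 'I_d) -> 'I_d -> C) kk :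
  (forall t k, \sum_i `|pp t k i| ^+ 2 <= 1) ->
  \sum_(a < #|{ffun 'I_T -> 'I_d}|) `|\prod_t pp t (kk t) (ev a t)| ^+ 2 <= 1.
Proof.
move=> H.
under eq_bigr do rewrite normr_prod -prodrXl.
rewrite (sum_enum (fun f : {ffun 'I_T -> 'I_d} => \prod_t `|pp t (kk t) (f t)| ^+ 2)).
rewrite -(bigA_distr_bigA (fun t i => `|pp t (kk t) i| ^+ 2)).
apply: prodr_ile1 => t _; rewrite H andbT.
by apply: sumr_ge0 => i _; apply: exprn_ge0.
Qed.

Lemma tens_bound W : contraction W ->
  `|\tr (tens F *m W)| <= \prod_t \sum_k `|c t k|.
Proof.
move=> HW.
have -> : \tr (tens F *m W) = \sum_(kk : {ffun 'I_T -> ('I_d * 'I_d)}) (\prod_t c t (kk t)) *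
   \sum_a \sum_b (\prod_t p t (kk t) (ev a t)) * (\prod_t q t (kk t) (ev b t))^* * W b a.
  rewrite /mxtrace; under eq_bigr do rewrite mxE.
  under eq_bigr do under eq_bigr do rewrite tens_expand mulr_suml.
  under eq_bigr do rewrite exchange_big.
  rewrite exchange_big; apply: eq_bigr => kk _; rewrite mulr_sumr.
  apply: eq_bigr => a _; rewrite mulr_sumr; apply: eq_bigr => b _.
  by rewrite !mulrA.
apply: (le_trans (ler_norm_sum _ _ _)).
rewrite (bigA_distr_bigA (fun t k => `|c t k|)).
apply: ler_sum => kk _; rewrite normrM normr_prod.
apply: ler_piMr; first by apply: prodr_ge0 => t _.
by apply: bilin_bound => //; apply: vec_norm_le1.
Qed.
End TensBound.
Definition qf n (A : 'M[C]_n) (u w : 'cV[C]_n) := (adjmx u *m A *m w) 0 0.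

Lemma mxED m n (A B : 'M[C]_(m, n)) i j : (A + B) i j = A i j + B i j.
Proof. by rewrite !mxE. Qed.

Lemma qfDl n (A : 'M[C]_n) u1 u2 w : qf A (u1 + u2) w = qf A u1 w + qf A u2 w.
Proof. by rewrite /qf adjmxD !mulmxDl mxED. Qed.
Lemma qfDr n (A : 'M[C]_n) u w1 w2 : qf A u (w1 + w2) = qf A u w1 + qf A u w2.
Proof. by rewrite /qf !mulmxDr mxED. Qed.
Lemma adjmxZ m n a (A : 'M[C]_(m, n)) : adjmx (a *: A) = a^* *: adjmx A.
Proof. by apply/matrixP => i j; rewrite !mxE rmorphM. Qed.
Lemma qfZl n (A : 'M[C]_n) a u w : qf A (a *: u) w = a^* * qf A u w.
Proof. by rewrite /qf adjmxZ -!scalemxAl mxE. Qed.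
Lemma qfZr n (A : 'M[C]_n) a u w : qf A u (a *: w) = a * qf A u w.
Proof. by rewrite /qf -!scalemxAr mxE. Qed.
Lemma adjmx_delta m n (i : 'I_m) (j : 'I_n) : adjmx (delta_mx i j : 'M[C]_(m, n)) = delta_mx j i.
Proof.
by apply/matrixP => a b; rewrite !mxE; case: eqP; case: eqP; rewrite ?andbF ?conjC0 ?conjC1.
Qed.
Lemma qf_delta n (A : 'M[C]_n) i j : qf A (delta_mx i 0) (delta_mx j 0) = A i j.
Proof. by rewrite /qf adjmx_delta -rowE -colE !mxE. Qed.

Lemma psd_herm n (A : 'M[C]_n) : psdmx A -> forall i j, (A j i)^* = A i j.
Proof.
move=> HA i j.
have q a : qf A (delta_mx i 0 + a *: delta_mx j 0) (delta_mx i 0 + a *: delta_mx j 0)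
   = A i i + a * A i j + a^* * A j i + a^* * a * A j j.
  by rewrite !qfDl !qfDr !qfZl !qfZr !qf_delta; ring.
have rr a : (A i i + a * A i j + a^* * A j i + a^* * a * A j j)^* =
            A i i + a * A i j + a^* * A j i + a^* * a * A j j.
  by apply/eqP; rewrite -CrealE -q; apply: ger0_real; apply: HA.
have rd k : (A k k)^* = A k k.
  by apply/eqP; rewrite -CrealE -qf_delta; apply: ger0_real; apply: HA.
have E1 := rr 1; have E2 := rr 'i.
rewrite !rmorphD !rmorphM /= ?conjCK !rd ?conjC1 ?conjCi ?mul1r in E1 E2.
set x := A i j in E1 E2 *; set y := A j i in E1 E2 *.
set X := x^* in E1 E2 *; set Y := y^* in E1 E2 *.
have F1 : X + Y - (x + y) = (A i i + X + Y + A j j) - (A i i + x + y + A j j) by ring.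
rewrite E1 subrr in F1.
have F2 : 'i * (Y - X - x + y) = (A i i + - 'i * X + 'i * Y + 'i * - 'i * A j j) -
    (A i i + 'i * x + - 'i * y + - 'i * 'i * A j j) by ring.
rewrite E2 subrr in F2; move/eqP: F2; rewrite mulf_eq0 (negbTE (neq0Ci _)) /= => /eqP F3.
have F4 : (Y - x) *+ 2 = (X + Y - (x + y)) + (Y - X - x + y) by ring.
rewrite F1 F3 addr0 in F4; move/eqP: F4; rewrite mulrn_eq0 /= subr_eq0 => /eqP.
done.
Qed.
Lemma tstar_adj m k (M : 'M[C]_(m, k)) : map_mx Num.conj (trmx M) = adjmx M.
Proof. by rewrite /adjmx map_trmx. Qed.

Lemma psd_adj n (A : 'M[C]_n) : psdmx A -> adjmx A = A.
Proof. by move=> HA; apply/matrixP => i j; rewrite adjmxE psd_herm. Qed.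

Lemma density_decomp n (A : 'M[C]_n) : density A ->
  exists Q : 'M[C]_n, exists sp : 'rV[C]_n,
  [/\ Q *m adjmx Q = 1%:M, (forall k, 0 <= sp 0 k), \sum_k sp 0 k = 1 &
      A = adjmx Q *m diag_mx sp *m Q].
Proof.
move=> [HA Htr].
have Hh := psd_adj HA.
have Hn : A \is normalmx by apply/normalmxP; rewrite tstar_adj Hh.
have HAe := orthomx_spectralP Hn.
have HU := spectral_unitarymx A; move/unitarymxP: HU; rewrite tstar_adj => HU.
rewrite invmx_unitary ?spectral_unitarymx // tstar_adj in HAe.
set Q := spectralmx A in HU HAe; set sp := spectral_diag A in HAe.
have HU' : adjmx Q *m Q = 1%:M by apply: mulmx1C.
exists Q, sp; split => //.
- move=> k; have := HA (col k (adjmx Q)); rewrite -entry_quad // adjmxK.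
  rewrite {1}HAe !mulmxA HU mul1mx -mulmxA HU mulmx1 mxE eqxx mulr1n //.
- rewrite -Htr {1}HAe mxtrace_mulC mulmxA HU mul1mx mxtrace_diag //.
Qed.
Lemma sum_eq_delta n (l : 'I_n) (f : 'I_n -> C) : \sum_l' ((l == l')%:R * f l') = f l.
Proof.
rewrite (bigD1 l) //= eqxx mul1r big1 ?addr0 // => l' Hl.
by rewrite eq_sym (negbTE Hl) mul0r.
Qed.

Lemma sum_pair n (G : 'I_n * 'I_n -> C) : \sum_k G k = \sum_a \sum_b G (a, b).
Proof. by rewrite pair_bigA; apply: eq_bigr => -[a b]. Qed.

Lemma density_cp n (A : 'M[C]_n) : density A ->
  exists cp : (('I_n * 'I_n) -> C) * (('I_n * 'I_n) -> 'I_n -> C),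
  [/\ forall i j, A i j = \sum_k cp.1 k * cp.2 k i * (cp.2 k j)^*,
      forall k, \sum_i `|cp.2 k i| ^+ 2 <= 1 &
      \sum_k `|cp.1 k| = 1].
Proof.
move=> HA; have [Q [sp [HQ Hsp Hsum HAe]]] := density_decomp HA.
exists ((fun k => (k.1 == k.2)%:R * sp 0 k.1), (fun k i => (Q k.1 i)^*)); split => /=.
- move=> i j; rewrite HAe sum_pair /= mul_mx_diag mxE.
  apply: eq_bigr => l _; rewrite !mxE conjCK.
  under eq_bigr do rewrite -!mulrA.
  by rewrite (sum_eq_delta l (fun l' => sp 0 l * ((Q l i)^* * Q l j))) ; ring.
- move=> k; have := congr1 (fun M : 'M[C]_n => M k.1 k.1) HQ.
  rewrite /= !mxE eqxx mulr1n => HH; rewrite -HH le_eqVlt; apply/orP; left; apply/eqP.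
  by apply: eq_bigr => i _; rewrite adjmxE norm_conjC normCK.
- rewrite sum_pair /=; rewrite -[RHS]Hsum; apply: eq_bigr => l _.
  rewrite (bigD1 l) //= eqxx mul1r ger0_norm // big1 ?addr0 // => l' Hl.
  by rewrite eq_sym (negbTE Hl) mul0r normr0.
Qed.

Lemma diff_decomp n (D : 'M[C]_n) i j :
  D i j = \sum_(k : 'I_n * 'I_n) D k.1 k.2 * (i == k.1)%:R * ((j == k.2)%:R)^*.
Proof.
rewrite sum_pair /= (bigD1 i) //= [X in _ + X]big1 ?addr0; last first.
  by move=> l Hl; apply: big1 => l' _; rewrite eq_sym (negbTE Hl) mulr0 mul0r.
rewrite (bigD1 j) //= [X in _ + X]big1 ?addr0; last first.
  by move=> l Hl; rewrite eq_sym (negbTE Hl) rmorph0 mulr0.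
by rewrite !eqxx /= !mulr1n conjC1 !mulr1.
Qed.

Lemma delta_norm n (l : 'I_n) : \sum_i `|(i == l)%:R : C| ^+ 2 <= 1.
Proof.
rewrite (bigD1 l) //= eqxx normr1 expr1n big1 ?addr0 // => i Hi.
by rewrite (negbTE Hi) normr0 expr0n.
Qed.
Definition telF T (f g : 'I_T -> C) (s t : 'I_T) :=
  if (t < s)%N then f t else if t == s then f t - g t else g t.

Lemma prod_telescope T (f g : 'I_T -> C) :
  \prod_t f t - \prod_t g t = \sum_(s < T) \prod_(t < T) telF f g s t.
Proof.
elim: T f g => [|T IH] f g; first by rewrite !big_ord0 subrr.
have E0 : \prod_(t < T.+1) telF f g ord0 t = (f ord0 - g ord0) * \prod_(t < T) g (lift ord0 t).
  by rewrite big_ord_recl /telF /=.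
have Es s : \prod_(t < T.+1) telF f g (lift ord0 s) t =
    f ord0 * \prod_(t < T) telF (fun t => f (lift ord0 t)) (fun t => g (lift ord0 t)) s t.
  by rewrite big_ord_recl /telF /=; congr (_ * _).
rewrite [\sum_(s < T.+1) _]big_ord_recl E0; rewrite (eq_bigr _ (fun s _ => Es s)).
rewrite -mulr_sumr -IH (big_ord_recl T f) (big_ord_recl T g); ring.
Qed.
Lemma tens_diff_bound T n (A B : 'I_T -> 'M[C]_n) (b : R) :
  (forall t, density (A t)) -> (forall t, density (B t)) ->
  \sum_t \sum_(k : 'I_n * 'I_n) `|(A t - B t) k.1 k.2| <= (b%:C)%C ->
  trnorm (tens A - tens B) <= b.
Proof.
move=> HA HB Hb.
have [cpA HcpA] := choice (fun t => density_cp (HA t)).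
have [cpB HcpB] := choice (fun t => density_cp (HB t)).
apply: trnorm_le => W HW.
pose Fs := fun (s t : 'I_T) => if (t < s)%N then A t else if t == s then A t - B t else B t.
have Htel : tens A - tens B = \sum_s tens (Fs s).
  apply/matrixP => i j; rewrite mxEB summxE !mxE prod_telescope.
  apply: eq_bigr => s _; rewrite mxE; apply: eq_bigr => t _; rewrite /telF /Fs.
  by case: ifP => _; [|case: ifP => _; rewrite ?mxEB].
rewrite Htel mulmx_suml raddf_sum /=.
apply: le_trans (ler_norm_sum _ _ _) _; apply: le_trans Hb.
apply: ler_sum => s _.
pose c := fun t : 'I_T => if (t < s)%N then (cpA t).1 else if t == s then (fun k : 'I_n * 'I_n => (A t - B t) k.1 k.2) else (cpB t).1.
pose p := fun t : 'I_T => if (t < s)%N then (cpA t).2 else if t == s then (fun (k : 'I_n * 'I_n) (i : 'I_n) => (i == k.1)%:R) else (cpB t).2.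
pose q := fun t : 'I_T => if (t < s)%N then (cpA t).2 else if t == s then (fun (k : 'I_n * 'I_n) (i : 'I_n) => (i == k.2)%:R) else (cpB t).2.
have HF : forall t i j, Fs s t i j = \sum_k c t k * p t k i * (q t k j)^*.
  move=> t i j; rewrite /Fs /c /p /q; case: ifP => _; first by case: (HcpA t).
  by case: ifP => _; [exact: diff_decomp | case: (HcpB t)].
have Hp : forall t k, \sum_i `|p t k i| ^+ 2 <= 1.
  move=> t k; rewrite /p; case: ifP => _; first by case: (HcpA t).
  by case: ifP => _; [exact: delta_norm | case: (HcpB t)].
have Hq : forall t k, \sum_i `|q t k i| ^+ 2 <= 1.
  move=> t k; rewrite /q; case: ifP => _; first by case: (HcpA t).
  by case: ifP => _; [exact: delta_norm | case: (HcpB t)].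
apply: le_trans (tens_bound HF Hp Hq HW) _.
rewrite (bigD1 s) //= [X in _ * X]big1 ?mulr1.
  by rewrite /c ltnn eqxx.
move=> t Hts; rewrite /c (negbTE Hts); case: ifP => _.
  by case: (HcpA t).
by case: (HcpB t).
Qed.
Lemma entry_le1 n (A : 'M[C]_n) : density A -> forall i j, `|A i j| <= 1.
Proof.
move=> HA i j; have [[c p] [HF Hp Hc]] := density_cp HA; rewrite /= in HF Hp Hc.
have Hp1 k l : `|p k l| <= 1.
  rewrite -(@expr_le1 _ 2) //; apply: le_trans (Hp k).
  rewrite (bigD1 l) //= lerDl; apply: sumr_ge0 => ? _; exact: exprn_ge0.
rewrite HF -Hc; apply: le_trans (ler_norm_sum _ _ _) _; apply: ler_sum => k _.
rewrite !normrM norm_conjC -mulrA; apply: ler_piMr => //.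
by apply: mulr_ile1.
Qed.

Lemma Re_le_norm (z : C) : (`|complex.Re z|%:C)%C <= `|z|.
Proof.
rewrite normc_def lecR.
set a := complex.Re z; set b := complex.Im z.
rewrite -sqrtr_sqr ler_sqrt; first by rewrite lerDl sqr_ge0.
by rewrite addr_ge0 // sqr_ge0.
Qed.
Lemma Im_le_norm (z : C) : (`|complex.Im z|%:C)%C <= `|z|.
Proof.
rewrite normc_def lecR.
set a := complex.Re z; set b := complex.Im z.
rewrite -sqrtr_sqr ler_sqrt; first by rewrite lerDr sqr_ge0.
by rewrite addr_ge0 // sqr_ge0.
Qed.
Lemma norm_le_ReIm (z : C) : `|z| <= ((`|complex.Re z| + `|complex.Im z|)%:C)%C.
Proof.
rewrite normc_def lecR.
set a := complex.Re z; set b := complex.Im z.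
have h : 0 <= `|a| + `|b| by rewrite addr_ge0.
rewrite -[X in _ <= X](ger0_norm h) -sqrtr_sqr ler_sqrt; last by rewrite sqr_ge0.
rewrite sqrrD -(real_normK (num_real a)) -(real_normK (num_real b)).
rewrite -addrA lerD2l addrC lerDl.
by rewrite mulrn_wge0 // mulr_ge0.
Qed.
Lemma Re_sub (z w : C) : complex.Re (z - w) = complex.Re z - complex.Re w.
Proof. by case: z; case: w. Qed.
Lemma Im_sub (z w : C) : complex.Im (z - w) = complex.Im z - complex.Im w.
Proof. by case: z; case: w. Qed.
Lemma Re_conj (z : C) : complex.Re (z^*) = complex.Re z.
Proof. by case: z. Qed.
Lemma Im_conj (z : C) : complex.Im (z^*) = - complex.Im z.
Proof. by case: z. Qed.
Definition qz (M : nat) (r : R) : 'I_(2 * M).+1 :=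
  inord (absz (Num.floor (r * M%:R) + (M%:Z)%R)).

Lemma qz_range M (r : R) : `|r| <= 1 ->
  ((0 : int) <= Num.floor (r * M%:R) + (M%:Z)%R) /\ (Num.floor (r * M%:R) <= (M%:Z)%R).
Proof.
move=> /[dup] Hr; rewrite ler_norml => /andP[r1 r2].
have M0 : (0 : R) <= M%:R by [].
split.
  rewrite -lerBlDr sub0r floor_ge_int mulrNz.
  by rewrite pmulrn -mulN1r ler_wpM2r.
rewrite -ltzD1 floor_lt_int intrD pmulrn -[X in X < _ + _]mul1r.
have h : r * (M%:~R) <= M%:~R :> R.
  by rewrite -[X in _ <= X]mul1r ler_wpM2r // ler0z.
rewrite mul1r mulr1z; lra.
Qed.
Lemma qz_close M (r r' : R) : (0 < M)%N -> `|r| <= 1 -> `|r'| <= 1 ->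
  qz M r = qz M r' -> `|r - r'| <= M%:R^-1.
Proof.
move=> M0 h h' /(congr1 (@nat_of_ord _)); rewrite /qz.
have [a0 a1] := qz_range M h; have [b0 b1] := qz_range M h'.
move: a0 a1 b0 b1.
set f := Num.floor (r * M%:R); set f' := Num.floor (r' * M%:R).
move=> a0 a1 b0 b1.
rewrite !inordK; [|lia|lia].
move=> Heq; have {Heq} Hff : f = f' by lia.
have := floor_itv (r * M%:R); have := floor_itv (r' * M%:R).
rewrite -/f -/f' -Hff intrD mulr1z => /andP[c1 c2] /andP[c3 c4].
have Mp : (0 : R) < M%:R by rewrite ltr0n.
rewrite -div1r ler_pdivlMr // -[X in _ * X]ger0_norm ?ler0n // -normrM mulrBl.
rewrite ler_norml; apply/andP; split; lra.
Qed.
Definition ekey M n (A : 'M[C]_n) : {ffun 'I_n * 'I_n -> 'I_(2 * M).+1} :=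
  [ffun ij : 'I_n * 'I_n => if (ij.1 <= ij.2)%N then qz M (complex.Re (A ij.1 ij.2))
              else qz M (complex.Im (A ij.1 ij.2))].

Lemma ReIm_le1 n (A : 'M[C]_n) : density A -> forall i j,
  `|complex.Re (A i j)| <= 1 /\ `|complex.Im (A i j)| <= 1.
Proof.
move=> HA i j; have H := entry_le1 HA i j.
by split; rewrite -lecR; apply: le_trans H; [exact: Re_le_norm | exact: Im_le_norm].
Qed.

Lemma Im_herm_diag n (A : 'M[C]_n) : density A -> forall i, complex.Im (A i i) = 0.
Proof.
move=> HA i; have H := psd_herm HA.1 i i.
have : complex.Im (A i i) = - complex.Im (A i i) by rewrite -{1}H Im_conj.
move/eqP; rewrite -subr_eq0 opprK -mulr2n mulrn_eq0 /=; by move/eqP.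
Qed.

Lemma ekey_close M n (A B : 'M[C]_n) : (0 < M)%N -> density A -> density B ->
  ekey M A = ekey M B ->
  forall i j, `|A i j - B i j| <= (((2 : R) * M%:R^-1)%:C)%C.
Proof.
move=> M0 HA HB Hk.
have HhA := psd_herm HA.1; have HhB := psd_herm HB.1.
have key (i j : 'I_n) : (if (i <= j)%N then qz M (complex.Re (A i j)) else qz M (complex.Im (A i j))) =
               (if (i <= j)%N then qz M (complex.Re (B i j)) else qz M (complex.Im (B i j))).
  by have := congr1 (fun f : {ffun 'I_n * 'I_n -> 'I_(2 * M).+1} => f (i, j)) Hk; rewrite /ekey !ffunE.
have ReC (i j : 'I_n) : `|complex.Re (A i j) - complex.Re (B i j)| <= M%:R^-1.
  case: (leqP i j) => hij.
    have := key i j; rewrite hij => /qz_close; apply => //.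
      by case: (ReIm_le1 HA i j).
    by case: (ReIm_le1 HB i j).
  have := key j i; rewrite (ltnW hij) => /qz_close H.
  rewrite -HhA -HhB !Re_conj; apply: H => //.
    by case: (ReIm_le1 HA j i).
  by case: (ReIm_le1 HB j i).
have ImC (i j : 'I_n) : `|complex.Im (A i j) - complex.Im (B i j)| <= M%:R^-1.
  case: (ltngtP i j) => hij.
  - have := key j i; rewrite leqNgt hij /= => /qz_close H.
    rewrite -HhA -HhB !Im_conj.
    have -> : forall x y : R, - x - - y = - (x - y) by move=> x y; ring.
    rewrite normrN; apply: H => //.
      by case: (ReIm_le1 HA j i).
    by case: (ReIm_le1 HB j i).
  - have := key i j; rewrite leqNgt hij /= => /qz_close; apply => //.
      by case: (ReIm_le1 HA i j).
    by case: (ReIm_le1 HB i j).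
  - have -> : j = i by apply: val_inj.
    by rewrite !Im_herm_diag // subrr normr0 invr_ge0 ler0n.
move=> i j; apply: le_trans (norm_le_ReIm _) _.
rewrite lecR Re_sub Im_sub mulr2n mulrDl mul1r.
by apply: lerD.
Qed.
Lemma expn_mono a b e : (a <= b)%N -> (a ^ e <= b ^ e)%N.
Proof. by move=> hab; elim: e => [//|e IH]; rewrite !expnS leq_mul. Qed.

Lemma ln_term_ge0 (T d : nat) : (1 <= T)%N -> 0 <= ln (T%:R ^+ 6 * d%:R : R).
Proof.
move=> T1; case: d => [|d]; first by rewrite mulr0 ln0.
apply: ln_ge0; apply: mulr_ege1; first by apply: exprn_ege1; rewrite ler1n.
by rewrite ler1n.
Qed.

Lemma final_ineq (T dd m : nat) : (1 <= T)%N -> (2 * dd < m)%N ->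
  ((2 : R) * ((m * T ^ 6)%N%:R)^-1) *+ dd *+ T <= T%:R ^- 5.
Proof.
move=> T1 hm.
have Tp : (0 : R) < T%:R by rewrite ltr0n.
have mp : (0 : R) < m%:R by rewrite ltr0n; apply: leq_ltn_trans hm.
rewrite -[_ *+ T]mulr_natr -[_ *+ dd]mulr_natr natrM natrX.
have h2 : 2 * dd%:R / m%:R <= 1 :> R.
  by rewrite ler_pdivrMr // mul1r -[2]/(2%:R) -natrM ler_nat ltnW.
move: Tp h2 mp; move: (T%:R) (m%:R) => t mm Tp h2 mp.
have tn : t != 0 by rewrite gt_eqF.
have mn : mm != 0 by rewrite gt_eqF.
have -> : 2 * (mm * t ^+ 6)^-1 * dd%:R * t = (2 * dd%:R / mm) * (t ^+ 5)^-1.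
  by field; rewrite ?mn ?tn ?expf_neq0.
by apply: ler_piMl => //; rewrite invr_ge0 exprn_ge0 // ltW.
Qed.
Lemma nat_ident (a t d x : nat) :
  (((a * t ^ 6) ^ (d * d)) ^ x = (a ^ (d * d)) ^ x * t ^ (6 * x * d ^ 2))%N.
Proof.
rewrite expnMn expnMn -!expnM mulnn; congr (_ * (t ^ _))%N; ring.
Qed.

Lemma lemma6_sec (d : nat) :
  exists K : R, 0 < K /\
  forall (X : finType) (Theta : Type) (rho : Theta -> X -> 'M[R[i]]_d),
  (forall th x, density (rho th x)) ->
  forall T : nat, (1 <= T)%N ->
  exists (Thetat : finType) (rhot : Thetat -> X -> 'M[R[i]]_d),
    (forall tht x, density (rhot tht x)) /\
    (#|Thetat|%:R <= K ^+ #|X| * T%:R ^+ (6 * #|X| * d ^ 2)) /\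
    (forall th : Theta, exists tht : Thetat, forall x : 'I_T -> X,
        trnorm (tensor_state (rho th) x - tensor_state (rhot tht) x)
        <= T%:R ^- 5) /\
    (forall P : X -> R, pmf P ->
       forall tht : Thetat,
         holevo P (rhot tht) >=
         inf [set holevo P (rho th) | th in [set: Theta]]
         - 2 * T%:R ^- 6 * ln (T%:R ^+ 6 * d%:R)).
Proof.
pose m := (2 * (d * d)).+1.
exists ((3 * m) ^ (d * d))%:R; split.
  by rewrite ltr0n expn_gt0 muln_gt0.
move=> X Theta rho Hrho T T1.
pose M := (m * T ^ 6)%N.
have M0 : (0 < M)%N by rewrite muln_gt0 expn_gt0 T1.
pose keyT := {ffun X -> {ffun 'I_d * 'I_d -> 'I_(2 * M).+1}}.
pose kf := fun th : Theta => [ffun x => ekey M (rho th x)] : keyT.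
pose Pk := fun k : keyT => `[< exists th, kf th = k >].
pose thpick := fun k : {k : keyT | Pk k} => proj1_sig (cid (asboolW (valP k))).
have Hpick : forall k, kf (thpick k) = val k.
  by move=> k; rewrite /thpick; case: (cid _).
exists {k : keyT | Pk k}, (fun k x => rho (thpick k) x).
split; first by move=> k x; apply: Hrho.
split.
  rewrite card_sig.
  apply: (@le_trans _ _ (#|keyT|%:R)); first by rewrite ler_nat max_card.
  rewrite /keyT !card_ffun card_prod !card_ord -!natrX -natrM ler_nat.
  have h1 : ((2 * M).+1 <= 3 * m * T ^ 6)%N.
    by rewrite -mulnA -/M; lia.
  apply: (@leq_trans (((3 * m * T ^ 6) ^ (d * d)) ^ #|X|)).
    by apply: expn_mono; apply: expn_mono.
  by rewrite nat_ident.
split.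
  move=> th.
  have Pth : Pk (kf th) by apply/asboolP; exists th.
  pose k : {k : keyT | Pk k} := exist (fun k => Pk k) (kf th) Pth.
  exists k => x.
  have Hk : kf (thpick k) = kf th := Hpick k.
  rewrite !tensor_stateE.
  apply: tens_diff_bound => [t|t|]; try apply: Hrho.
  have Hkey t : ekey M (rho th (x t)) = ekey M (rho (thpick k) (x t)).
    by have := congr1 (fun f : keyT => f (x t)) Hk; rewrite !ffunE => ->.
  apply: (@le_trans _ _ (\sum_(t < T) \sum_(kk : 'I_d * 'I_d) (((2:R) * M%:R^-1)%:C)%C)).
    apply: ler_sum => t _; apply: ler_sum => kk _; rewrite mxEB.
    by apply: ekey_close => //; apply: Hrho.
  rewrite !sumr_const card_prod !card_ord -!(rmorphMn (complex.real_complex R)) lecR.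
  by apply: final_ineq.
move=> P HP k.
set S := ([set holevo P (rho th) | th in [set: Theta]])%classic.
have hl : has_lbound S by exists (- d%:R) => y [th _ <-]; exact: holevo_lb.
have hk : S (holevo P (rho (thpick k))) by exists (thpick k).
have h := ge_inf hl hk.
have c0 : 0 <= 2 / T%:R ^+ 6 * ln (T%:R ^+ 6 * d%:R) :> R.
  by rewrite mulr_ge0 ?ln_term_ge0 // divr_ge0 // exprn_ge0.
rewrite lerBlDr; apply: le_trans h _; rewrite lerDl //.
Qed.
End Main.

Unset Implicit Arguments.

Theorem lemma6 (R : realType) (d : nat) :
  exists K : R, 0 < K /\
  forall (X : finType) (Theta : Type) (rho : Theta -> X -> 'M[R[i]]_d),
  (forall th x, density (rho th x)) ->
  forall T : nat, (1 <= T)%N ->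
  exists (Thetat : finType) (rhot : Thetat -> X -> 'M[R[i]]_d),
    (forall tht x, density (rhot tht x)) /\
    (* (1) *)
    (#|Thetat|%:R <= K ^+ #|X| * T%:R ^+ (6 * #|X| * d ^ 2)) /\
    (* (2) *)
    (forall th : Theta, exists tht : Thetat, forall x : 'I_T -> X,
        trnorm (tensor_state (rho th) x - tensor_state (rhot tht) x)
        <= T%:R ^- 5) /\
    (* (3) *)
    (forall P : X -> R, pmf P ->
       forall tht : Thetat,
         holevo P (rhot tht) >=
         inf [set holevo P (rho th) | th in [set: Theta]]
         - 2 * T%:R ^- 6 * ln (T%:R ^+ 6 * d%:R)).
Proof. exact: lemma6_sec. Qed.
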